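(* Let $f\colon X\to Y$ be a perfect map between metrizable spaces, $d$ a compatible metric on $X$, and $(M,\varrho)$ a complete metric space. For every closed $H\subset Y$ and all $m,n\ge1$, the set $\mathcal{K}(m,n,H)$ is open in $C(X,M)$ with respect to the source limitation topology.
   Context: For $A\subset X$, $\delta>0$, $B(A,\delta)=\{x\in X:d(x,A)<\delta\}$. $C(x,g|f^{-1}(y))$ is the component of $g^{-1}(g(x))\cap f^{-1}(y)$ containing $x$. $\mathcal{K}(m,n,y)$ is the set of $g\in C(X,M)$ such that for every subcontinuum $L\subset f^{-1}(y)$ with $\operatorname{diam}g(L)\ge1/n$ there is $x\in L$ with $C(x,g|f^{-1}(y))\subset B(L,1/m)$; $\mathcal{K}(m,n,H)=\bigcap_{y\in H}\mathcal{K}(m,n,y)$. The source limitation topology on $C(X,M)$ has base at $g$ the sets $\{g':\varrho(g'(x),g(x))<\varepsilon(x)\ \forall x\}$ with $\varepsilon\colon X\to(0,1]$ continuous. *)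

(* Defs.v *)
From Stdlib Require Import Reals List.
Open Scope R_scope.

Record MetricSpace : Type := {
  carrier :> Type;
  dist : carrier -> carrier -> R;
  dist_nonneg : forall x y, 0 <= dist x y;
  dist_sym : forall x y, dist x y = dist y x;
  dist_eq0 : forall x y, dist x y = 0 <-> x = y;
  dist_tri : forall x y z, dist x z <= dist x y + dist y z
}.

Arguments dist {m} _ _.

Definition Rdist (a b : R) : R := Rabs (a - b).

Section Topo.
Variable X : MetricSpace.

Definition is_open (U : X -> Prop) : Prop :=
  forall x, U x -> exists r, 0 < r /\ forall z, dist x z < r -> U z.

Definition is_closed (F : X -> Prop) : Prop := is_open (fun x => ~ F x).

Definition is_compact (K : X -> Prop) : Prop :=
  forall (I : Type) (U : I -> X -> Prop),
    (forall i, is_open (U i)) ->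
    (forall x, K x -> exists i, U i x) ->
    exists l : list I, forall x, K x -> exists i, In i l /\ U i x.

Definition is_connected (A : X -> Prop) : Prop :=
  ~ exists U V : X -> Prop,
      is_open U /\ is_open V /\
      (forall x, A x -> U x \/ V x) /\
      (exists x, A x /\ U x) /\ (exists x, A x /\ V x) /\
      (forall x, A x -> U x -> V x -> False).

Definition is_continuum (L : X -> Prop) : Prop :=
  (exists x, L x) /\ is_compact L /\ is_connected L.

Definition diam_ge (A : X -> Prop) (r : R) : Prop :=
  forall s, s < r -> exists a b, A a /\ A b /\ s < dist a b.

(* B(A, delta) = { x | d(x, A) < delta }, d(x,A) = inf_{a in A} d(x,a) *)
Definition nbhd (A : X -> Prop) (delta : R) : X -> Prop :=
  fun x => exists a, A a /\ dist x a < delta.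

Definition component (S : X -> Prop) (x : X) : X -> Prop :=
  fun z => exists C : X -> Prop,
    is_connected C /\ (forall w, C w -> S w) /\ C x /\ C z.

Definition complete : Prop :=
  forall u : nat -> X,
    (forall eps, 0 < eps -> exists N, forall p q, (N <= p)%nat -> (N <= q)%nat ->
       dist (u p) (u q) < eps) ->
    exists l, forall eps, 0 < eps -> exists N, forall p, (N <= p)%nat ->
       dist (u p) l < eps.
End Topo.

Arguments is_open {X} _.
Arguments is_closed {X} _.
Arguments is_compact {X} _.
Arguments is_connected {X} _.
Arguments is_continuum {X} _.
Arguments diam_ge {X} _ _.
Arguments nbhd {X} _ _.
Arguments component {X} _ _.
Arguments complete X : clear implicits.

Definition continuous {X Y : MetricSpace} (f : X -> Y) : Prop :=
  forall x eps, 0 < eps -> exists delta, 0 < delta /\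
    forall z, dist x z < delta -> dist (f x) (f z) < eps.

Definition continuous_R {X : MetricSpace} (e : X -> R) : Prop :=
  forall x eps, 0 < eps -> exists delta, 0 < delta /\
    forall z, dist x z < delta -> Rdist (e x) (e z) < eps.

Definition image {X Y : MetricSpace} (f : X -> Y) (A : X -> Prop) : Y -> Prop :=
  fun y => exists x, A x /\ f x = y.

Definition perfect {X Y : MetricSpace} (f : X -> Y) : Prop :=
  continuous f /\
  (forall F : X -> Prop, is_closed F -> is_closed (image f F)) /\
  (forall y : Y, is_compact (fun x => f x = y)).

Definition Ccomp {X Y M : MetricSpace} (f : X -> Y) (g : X -> M) (y : Y) (x : X)
  : X -> Prop :=
  component (fun z => g z = g x /\ f z = y) x.

Definition Kset {X Y M : MetricSpace} (f : X -> Y) (m n : nat) (y : Y)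
  (g : X -> M) : Prop :=
  forall L : X -> Prop,
    is_continuum L -> (forall x, L x -> f x = y) ->
    diam_ge (image g L) (1 / INR n) ->
    exists x, L x /\ forall z, Ccomp f g y x z -> nbhd L (1 / INR m) z.

Definition KsetH {X Y M : MetricSpace} (f : X -> Y) (m n : nat) (H : Y -> Prop)
  (g : X -> M) : Prop :=
  forall y, H y -> Kset f m n y g.

(* A subset of C(X,M) (given as a predicate on maps, only its values on
   continuous maps matter) is open in the source limitation topology. *)
Definition sl_open {X M : MetricSpace} (P : (X -> M) -> Prop) : Prop :=
  forall g : X -> M, continuous g -> P g ->
    exists eps : X -> R,
      continuous_R eps /\ (forall x, 0 < eps x <= 1) /\
      forall g' : X -> M, continuous g' ->
        (forall x, dist (g' x) (g x) < eps x) -> P g'.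

(* Main.v *)
Require Import Defs.
From Stdlib Require Import Reals Lra Lia List Classical ClassicalEpsilon.
From Stdlib Require Cantor.
Require Import Defs.
Open Scope R_scope.

Definition ir (k : nat) : R := / (INR k + 1).

Lemma ir_pos k : 0 < ir k.
Proof. unfold ir. apply Rinv_0_lt_compat. pose proof (pos_INR k). lra. Qed.

Lemma ir_le j k : (j <= k)%nat -> ir k <= ir j.
Proof.
  intros H. unfold ir. apply Rinv_le_contravar. pose proof (pos_INR j); lra.
  apply le_INR in H. lra.
Qed.

Lemma ir_small eps : 0 < eps -> exists N, forall k, (N <= k)%nat -> ir k < eps.
Proof.
  intros He. destruct (archimed_cor1 eps He) as [N [HN HN0]].
  exists N. intros k Hk. eapply Rle_lt_trans; [|exact HN].
  unfold ir. apply Rinv_le_contravar. apply lt_0_INR; lia.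
  apply le_INR in Hk. lra.
Qed.

Lemma dist_self (X : MetricSpace) (x : X) : dist x x = 0.
Proof. apply dist_eq0. reflexivity. Qed.

Lemma ball_open (X : MetricSpace) (c : X) r : is_open (fun z => dist c z < r).
Proof.
  intros x Hx. exists (r - dist c x). split. lra.
  intros z Hz. pose proof (dist_tri X c x z). lra.
Qed.

Lemma max_list (I : Type) (N : I -> nat) (l : list I) :
  exists M, forall i, In i l -> (N i <= M)%nat.
Proof.
  induction l as [|a l [M HM]]. exists 0%nat. intros i [].
  exists (Nat.max (N a) M). intros i [<-|Hi]. lia. specialize (HM i Hi). lia.
Qed.

Lemma clust (X Y : MetricSpace) (f : X -> Y) (hf : perfect f) (y0 : Y)
  (u : nat -> X) (hu : forall j, dist (f (u j)) y0 < ir j) :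
  exists c, f c = y0 /\ forall eps, 0 < eps -> forall N, exists j, (N <= j)%nat /\ dist (u j) c < eps.
Proof.
  destruct hf as [fc [fcl fcp]].
  apply NNPP. intros Hn.
  assert (Hb : forall c : {c : X | f c = y0}, exists p : R * nat, 0 < fst p /\
     forall j, (snd p <= j)%nat -> fst p <= dist (u j) (proj1_sig c)).
  { intros [c Hc]. simpl. apply NNPP. intros H1. apply Hn. exists c. split. exact Hc.
    intros eps He N. apply NNPP. intros H2. apply H1. exists (eps, N). simpl. split. exact He.
    intros j Hj. apply Rnot_lt_le. intros H3. apply H2. exists j. auto. }
  set (ep := fun c => proj1_sig (constructive_indefinite_description _ (Hb c))).
  assert (Hep : forall c, 0 < fst (ep c) /\ forall j, (snd (ep c) <= j)%nat -> fst (ep c) <= dist (u j) (proj1_sig c)).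
  { intros c. exact (proj2_sig (constructive_indefinite_description _ (Hb c))). }
  destruct (fcp y0 _ (fun c z => dist (proj1_sig c) z < fst (ep c))) as [l Hl].
  { intros c. apply ball_open. }
  { intros x Hx. exists (exist _ x Hx). simpl. rewrite dist_self. apply Hep. }
  destruct (max_list _ (fun c => snd (ep c)) l) as [M HM].
  set (F := fun x => forall eps, 0 < eps -> exists j, (M <= j)%nat /\ dist x (u j) < eps).
  assert (HF : is_closed F).
  { intros x Hx. unfold F in Hx.
    apply not_all_ex_not in Hx. destruct Hx as [eps Hx].
    apply imply_to_and in Hx. destruct Hx as [He Hx].
    exists (eps/2). split. lra. intros z Hz Fz.
    destruct (Fz (eps/2)) as [j [Hj Hd]]. lra. apply Hx. exists j. split. exact Hj.
    pose proof (dist_tri X x z (u j)). lra. }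
  pose proof (fcl F HF) as HI.
  assert (Hy : image f F y0).
  { apply NNPP. intros Hy. destruct (HI y0 Hy) as [r [Hr Hr2]].
    destruct (ir_small r Hr) as [N HN].
    apply (Hr2 (f (u (Nat.max N M)))).
    rewrite dist_sym. eapply Rlt_trans. apply hu. apply HN. lia.
    exists (u (Nat.max N M)). split; [|reflexivity].
    intros e He. exists (Nat.max N M). split. lia. rewrite dist_self. exact He. }
  destruct Hy as [x [Fx Hfx]].
  destruct (Hl x Hfx) as [c [Hcl Hcx]].
  destruct (Hep c) as [Hp1 Hp2].
  destruct (Fx (fst (ep c) - dist (proj1_sig c) x)) as [j [Hj Hd]]. lra.
  specialize (Hp2 j). specialize (HM c Hcl). simpl in HM.
  assert (fst (ep c) <= dist (u j) (proj1_sig c)) by (apply Hp2; lia).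
  pose proof (dist_tri X (proj1_sig c) x (u j)). rewrite dist_sym in H. lra.
Qed.

Lemma extract (X : MetricSpace) (u : nat -> X) (c : X)
  (h : forall eps, 0 < eps -> forall N, exists j, (N <= j)%nat /\ dist (u j) c < eps) :
  exists s : nat -> nat, forall j, (j <= s j)%nat /\ dist (u (s j)) c < ir j.
Proof.
  assert (H : forall j, exists k, (j <= k)%nat /\ dist (u k) c < ir j).
  { intros j. apply h. apply ir_pos. }
  exists (fun j => proj1_sig (constructive_indefinite_description _ (H j))).
  intros j. exact (proj2_sig (constructive_indefinite_description _ (H j))).
Qed.

Definition infi (Q : nat -> Prop) : Prop := forall N, exists k, (N <= k)%nat /\ Q k.

Fixpoint Sd (P : nat -> nat -> Prop) (i : nat) : nat -> Prop :=
  match i with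
  | O => fun _ => True
  | S i' => fun k => Sd P i' k /\ (infi (fun k => Sd P i' k /\ P i' k) -> P i' k)
                   /\ (~ infi (fun k => Sd P i' k /\ P i' k) -> ~ P i' k)
  end.

Lemma Sd_inf P i : infi (Sd P i).
Proof.
  induction i as [|i IH].
  - intros N. exists N. simpl. split; auto.
  - destruct (classic (infi (fun k => Sd P i k /\ P i k))) as [Hi|Hi].
    + intros N. destruct (Hi N) as [k [Hk [H1 H2]]]. exists k. simpl. split. exact Hk.
      split. exact H1. split. auto. intros C. contradiction.
    + assert (H0 : exists N0, forall k, (N0 <= k)%nat -> ~ (Sd P i k /\ P i k)).
      { apply NNPP. intros C. apply Hi. intros N. apply NNPP. intros C2. apply C. exists N.
        intros k Hk Hk2. apply C2. exists k. auto. }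
      destruct H0 as [N0 HN0].
      intros N. destruct (IH (Nat.max N N0)) as [k [Hk Sk]]. exists k. simpl. split. lia.
      split. exact Sk. split. intros C. contradiction.
      intros _ Pk. apply (HN0 k). lia. auto.
Qed.

Lemma Sd_mono P i j k : (i <= j)%nat -> Sd P j k -> Sd P i k.
Proof.
  intros H. induction H. auto. intros Hs. apply IHle. simpl in Hs. tauto.
Qed.

Lemma diag (P : nat -> nat -> Prop) :
  exists s : nat -> nat, (forall j, (j <= s j)%nat) /\
    forall i, (exists N, forall j, (N <= j)%nat -> P i (s j)) \/
              (exists N, forall j, (N <= j)%nat -> ~ P i (s j)).
Proof.
  pose (H := fun j => Sd_inf P j j).
  set (s := fun j => proj1_sig (constructive_indefinite_description _ (H j))).
  assert (Hs : forall j, (j <= s j)%nat /\ Sd P j (s j)).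
  { intros j. exact (proj2_sig (constructive_indefinite_description _ (H j))). }
  exists s. split. intros j. apply Hs.
  intros i. destruct (classic (infi (fun k => Sd P i k /\ P i k))) as [Hi|Hi].
  - left. exists (S i). intros j Hj. destruct (Hs j) as [_ Hsj].
    apply (Sd_mono P (S i) j) in Hsj; [|exact Hj]. simpl in Hsj. tauto.
  - right. exists (S i). intros j Hj. destruct (Hs j) as [_ Hsj].
    apply (Sd_mono P (S i) j) in Hsj; [|exact Hj]. simpl in Hsj. tauto.
Qed.

Definition limsup {X : MetricSpace} (A : nat -> X -> Prop) (x : X) : Prop :=
  forall eps, 0 < eps -> forall N, exists k, (N <= k)%nat /\ exists a, A k a /\ dist x a < eps.

Definition liminf {X : MetricSpace} (A : nat -> X -> Prop) (x : X) : Prop :=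
  forall eps, 0 < eps -> exists N, forall k, (N <= k)%nat -> exists a, A k a /\ dist x a < eps.

Lemma liminf_limsup (X : MetricSpace) (A : nat -> X -> Prop) x : liminf A x -> limsup A x.
Proof.
  intros H eps He N. destruct (H eps He) as [N0 HN0]. exists (Nat.max N N0). split. lia.
  apply HN0. lia.
Qed.

Lemma limsup_closed (X : MetricSpace) (A : nat -> X -> Prop) x :
  (forall eps, 0 < eps -> exists w, limsup A w /\ dist x w < eps) -> limsup A x.
Proof.
  intros H eps He N. destruct (H (eps/2)) as [w [Hw Hd]]. lra.
  destruct (Hw (eps/2)) with (N := N) as [k [Hk [a [Ha Hda]]]]. lra.
  exists k. split. exact Hk. exists a. split. exact Ha.
  pose proof (dist_tri X x w a). lra.
Qed.

Lemma limsup_fiber (X Y : MetricSpace) (f : X -> Y) (fc : continuous f) (y0 : Y)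
  (A : nat -> X -> Prop) (hA : forall k a, A k a -> dist (f a) y0 < ir k) x :
  limsup A x -> f x = y0.
Proof.
  intros H. apply dist_eq0. apply Rle_antisym; [|apply dist_nonneg].
  apply Rnot_lt_le. intros Hp. set (e := dist (f x) y0) in *.
  destruct (fc x (e/2)) as [d [Hd Hd2]]. lra.
  destruct (ir_small (e/2)) as [N HN]. lra.
  destruct (H d Hd N) as [k [Hk [a [Ha Hda]]]].
  specialize (Hd2 a Hda). specialize (hA k a Ha). specialize (HN k Hk).
  pose proof (dist_tri Y (f x) (f a) y0). unfold e in *. lra.
Qed.

Lemma closed_sub_compact (X : MetricSpace) (K F : X -> Prop) (hK : is_compact K)
  (hFK : forall x, F x -> K x)
  (hF : forall x, (forall eps, 0 < eps -> exists w, F w /\ dist x w < eps) -> F x) :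
  is_compact F.
Proof.
  intros I U hU hcov.
  destruct (hK (option I) (fun o => match o with Some i => U i | None => fun x => ~ F x end)) as [l Hl].
  { intros [i|]. apply hU. intros x Hx.
    assert (H : exists eps, 0 < eps /\ forall w, F w -> eps <= dist x w).
    { apply NNPP. intros C. apply Hx. apply hF. intros eps He. apply NNPP. intros C2.
      apply C. exists eps. split. exact He. intros w Fw. apply Rnot_lt_le. intros C3. apply C2. eauto. }
    destruct H as [eps [He Hw]]. exists eps. split. exact He. intros z Hz Fz.
    specialize (Hw z Fz). lra. }
  { intros x Hx. destruct (classic (F x)) as [Fx|Fx].
    destruct (hcov x Fx) as [i Hi]. exists (Some i). exact Hi. exists None. exact Fx. }
  exists (flat_map (fun o => match o with Some i => i :: nil | None => nil end) l).
  intros x Fx. destruct (Hl x (hFK x Fx)) as [[i|] [Hin Hi]].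
  - exists i. split; [|exact Hi]. apply in_flat_map. exists (Some i). simpl. auto.
  - contradiction.
Qed.

Lemma conn_sep (X Y : MetricSpace) (f : X -> Y) (hf : perfect f) (y0 : Y)
  (A : nat -> X -> Prop) (hA : forall k a, A k a -> dist (f a) y0 < ir k)
  (hcon : forall k, is_connected (A k)) (x0 : X) (hx0 : liminf A x0)
  (U V : X -> Prop) (hU : is_open U) (hV : is_open V) (hUV : forall z, U z -> V z -> False)
  (hcov : forall x, limsup A x -> U x \/ V x) (hx0U : U x0) (q : X) (hq : limsup A q) (hqV : V q) :
  False.
Proof.
  destruct (hU x0 hx0U) as [r [Hr HrU]].
  destruct (hx0 r Hr) as [N0 HN0].
  destruct (hV q hqV) as [r' [Hr' HrV]].
  assert (Hb : forall N, exists p : nat * X, (N <= fst p)%nat /\ A (fst p) (snd p) /\ ~ U (snd p) /\ ~ V (snd p)).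
  { intros N. destruct (hq r' Hr' (Nat.max N N0)) as [k [Hk [a [Ha Hda]]]].
    destruct (HN0 k) as [a0 [Ha0 Hda0]]. lia.
    apply NNPP. intros C. apply (hcon k). exists U, V. split. exact hU. split. exact hV.
    split. intros x Hx. apply NNPP. intros C2. apply C. exists (pair k x). simpl. split. lia.
    split. exact Hx. tauto.
    split. exists a0. split. exact Ha0. apply HrU. exact Hda0.
    split. exists a. split. exact Ha. apply HrV. exact Hda.
    intros x _ H1 H2. exact (hUV x H1 H2). }
  set (p := fun N => proj1_sig (constructive_indefinite_description _ (Hb N))).
  assert (Hp : forall N, (N <= fst (p N))%nat /\ A (fst (p N)) (snd (p N)) /\ ~ U (snd (p N)) /\ ~ V (snd (p N))).
  { intros N. exact (proj2_sig (constructive_indefinite_description _ (Hb N))). }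
  destruct (clust X Y f hf y0 (fun N => snd (p N))) as [c [Hc Hcl]].
  { intros j. destruct (Hp j) as [H1 [H2 _]]. eapply Rlt_le_trans. apply hA. exact H2.
    apply ir_le. exact H1. }
  assert (Hlc : limsup A c).
  { intros eps He N. destruct (Hcl eps He N) as [j [Hj Hd]]. exists (fst (p j)).
    destruct (Hp j) as [H1 [H2 _]]. split. lia. exists (snd (p j)). split. exact H2.
    rewrite dist_sym. exact Hd. }
  destruct (hcov c Hlc) as [Hc1|Hc1].
  - destruct (hU c Hc1) as [s [Hs Hs2]]. destruct (Hcl s Hs 0%nat) as [j [_ Hd]].
    apply (proj1 (proj2 (proj2 (Hp j)))). apply Hs2. rewrite dist_sym. exact Hd.
  - destruct (hV c Hc1) as [s [Hs Hs2]]. destruct (Hcl s Hs 0%nat) as [j [_ Hd]].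
    apply (proj2 (proj2 (proj2 (Hp j)))). apply Hs2. rewrite dist_sym. exact Hd.
Qed.

Lemma limsup_connected (X Y : MetricSpace) (f : X -> Y) (hf : perfect f) (y0 : Y)
  (A : nat -> X -> Prop) (hA : forall k a, A k a -> dist (f a) y0 < ir k)
  (hcon : forall k, is_connected (A k)) (x0 : X) (hx0 : liminf A x0) :
  is_connected (limsup A).
Proof.
  intros [U [V [hU [hV [hcov [[p0 [Hp0 Hp0U]] [[q0 [Hq0 Hq0V]] hdis]]]]]]].
  assert (Hfib : forall x, limsup A x -> f x = y0).
  { intros x. apply limsup_fiber with (A := A). apply hf. exact hA. }
  assert (Hdel : exists del, 0 < del /\ forall p q, limsup A p -> U p -> limsup A q -> V q -> del <= dist p q).
  { apply NNPP. intros C.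
    assert (Hs : forall j, exists pq : X * X, limsup A (fst pq) /\ U (fst pq) /\ limsup A (snd pq) /\ V (snd pq)
                   /\ dist (fst pq) (snd pq) < ir j).
    { intros j. apply NNPP. intros C2. apply C. exists (ir j). split. apply ir_pos.
      intros p q H1 H2 H3 H4. apply Rnot_lt_le. intros H5. apply C2. exists (pair p q). simpl. tauto. }
    set (pq := fun j => proj1_sig (constructive_indefinite_description _ (Hs j))).
    assert (Hpq : forall j, limsup A (fst (pq j)) /\ U (fst (pq j)) /\ limsup A (snd (pq j)) /\ V (snd (pq j))
                   /\ dist (fst (pq j)) (snd (pq j)) < ir j).
    { intros j. exact (proj2_sig (constructive_indefinite_description _ (Hs j))). }
    destruct (clust X Y f hf y0 (fun j => fst (pq j))) as [c [Hc Hcl]].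
    { intros j. rewrite (Hfib _ (proj1 (Hpq j))). rewrite dist_self. apply ir_pos. }
    assert (Hlc : limsup A c).
    { apply limsup_closed. intros eps He. destruct (Hcl eps He 0%nat) as [j [_ Hd]].
      exists (fst (pq j)). split. apply Hpq. rewrite dist_sym. exact Hd. }
    destruct (hcov c Hlc) as [Hc1|Hc1].
    - destruct (hU c Hc1) as [s [Hs1 Hs2]].
      destruct (ir_small (s/2)) as [N HN]. lra.
      destruct (Hcl (s/2)) with (N := N) as [j [Hj Hd]]. lra.
      destruct (Hpq j) as [H1 [H2 [H3 [H4 H5]]]]. specialize (HN j Hj).
      apply (hdis (snd (pq j)) H3); [|exact H4]. apply Hs2.
      pose proof (dist_tri X c (fst (pq j)) (snd (pq j))). pose proof (dist_sym X c (fst (pq j))). lra.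
    - destruct (hV c Hc1) as [s [Hs1 Hs2]].
      destruct (Hcl s Hs1 0%nat) as [j [_ Hd]].
      destruct (Hpq j) as [H1 [H2 [H3 [H4 H5]]]].
      apply (hdis (fst (pq j)) H1 H2). apply Hs2. rewrite dist_sym. exact Hd. }
  destruct Hdel as [del [Hdel Hdel2]].
  set (U' := fun z => exists p, limsup A p /\ U p /\ dist p z < del/2).
  set (V' := fun z => exists p, limsup A p /\ V p /\ dist p z < del/2).
  assert (oU : is_open U').
  { intros z [p [H1 [H2 H3]]]. exists (del/2 - dist p z). split. lra. intros w Hw.
    exists p. split. exact H1. split. exact H2. pose proof (dist_tri X p z w). lra. }
  assert (oV : is_open V').
  { intros z [p [H1 [H2 H3]]]. exists (del/2 - dist p z). split. lra. intros w Hw.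
    exists p. split. exact H1. split. exact H2. pose proof (dist_tri X p z w). lra. }
  assert (dUV : forall z, U' z -> V' z -> False).
  { intros z [p [H1 [H2 H3]]] [q [H4 [H5 H6]]]. specialize (Hdel2 p q H1 H2 H4 H5).
    pose proof (dist_tri X p z q). rewrite (dist_sym X z q) in H. lra. }
  assert (cUV : forall x, limsup A x -> U' x \/ V' x).
  { intros x Hx. destruct (hcov x Hx) as [H|H]; [left|right]; exists x; rewrite dist_self; repeat split; auto; lra. }
  destruct (cUV x0 (liminf_limsup X A x0 hx0)) as [H0|H0].
  - apply (conn_sep X Y f hf y0 A hA hcon x0 hx0 U' V' oU oV dUV cUV H0 q0 Hq0).
    exists q0. rewrite dist_self. repeat split; auto; lra.
  - apply (conn_sep X Y f hf y0 A hA hcon x0 hx0 V' U' oV oU (fun z a b => dUV z b a)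
      (fun x h => match cUV x h with or_introl a => or_intror a | or_intror b => or_introl b end) H0 p0 Hp0).
    exists p0. rewrite dist_self. repeat split; auto; lra.
Qed.

Lemma limdiam (X Y M : MetricSpace) (f : X -> Y) (hf : perfect f) (y0 : Y)
  (g : X -> M) (gc : continuous g)
  (A : nat -> X -> Prop) (hA : forall k a, A k a -> dist (f a) y0 < ir k)
  (G : nat -> X -> M) (hG : forall k a, A k a -> dist (G k a) (g a) < ir k)
  (r : R) (hd : forall k, diam_ge (image (G k) (A k)) r) :
  diam_ge (image g (limsup A)) r.
Proof.
  intros s Hs. set (s' := (s + r)/2).
  assert (Hb : forall k, exists pq : X * X, A k (fst pq) /\ A k (snd pq) /\ s' < dist (G k (fst pq)) (G k (snd pq))).
  { intros k. destruct (hd k s') as [a [b [[p [Hp Hpa]] [[q [Hq Hqb]] Hab]]]]. unfold s'; lra.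
    exists (pair p q). simpl. subst. auto. }
  set (pq := fun k => proj1_sig (constructive_indefinite_description _ (Hb k))).
  assert (Hpq : forall k, A k (fst (pq k)) /\ A k (snd (pq k)) /\ s' < dist (G k (fst (pq k))) (G k (snd (pq k)))).
  { intros k. exact (proj2_sig (constructive_indefinite_description _ (Hb k))). }
  destruct (clust X Y f hf y0 (fun k => fst (pq k))) as [c [_ Hc]].
  { intros k. apply hA. apply Hpq. }
  destruct (extract X _ c Hc) as [sg Hsg].
  destruct (clust X Y f hf y0 (fun j => snd (pq (sg j)))) as [e [_ He]].
  { intros j. eapply Rlt_le_trans. apply hA. apply Hpq. apply ir_le. apply Hsg. }
  exists (g c), (g e). split; [|split].
  - exists c. split; [|reflexivity]. intros eps Heps N. destruct (Hc eps Heps N) as [j [Hj Hd]].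
    exists j. split. exact Hj. exists (fst (pq j)). split. apply Hpq. rewrite dist_sym. exact Hd.
  - exists e. split; [|reflexivity]. intros eps Heps N. destruct (He eps Heps N) as [j [Hj Hd]].
    exists (sg j). split. pose proof (proj1 (Hsg j)). lia. exists (snd (pq (sg j))). split. apply Hpq.
    rewrite dist_sym. exact Hd.
  - set (eta := (s' - s)/4).
    assert (Heta : 0 < eta) by (unfold eta, s'; lra).
    destruct (gc c eta Heta) as [dc [Hdc Hdc2]].
    destruct (gc e eta Heta) as [de [Hde Hde2]].
    destruct (ir_small (Rmin dc eta)) as [N1 HN1]. apply Rmin_pos; lra.
    destruct (He de Hde N1) as [j [Hj Hd]].
    set (k := sg j). destruct (Hsg j) as [Hk Hpk]. fold k in Hk, Hpk.
    destruct (Hpq k) as [Ap [Aq Hpq3]].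
    set (p := fst (pq k)) in *. set (q := snd (pq k)) in *.
    pose proof (HN1 j Hj) as Hir. pose proof (Rmin_l dc eta). pose proof (Rmin_r dc eta).
    pose proof (ir_le j k Hk).
    assert (E1 : dist (G k p) (g p) < eta) by (pose proof (hG k p Ap); lra).
    assert (E2 : dist (G k q) (g q) < eta) by (pose proof (hG k q Aq); lra).
    assert (E3 : dist (g c) (g p) < eta) by (apply Hdc2; rewrite dist_sym; lra).
    assert (E4 : dist (g e) (g q) < eta) by (apply Hde2; rewrite dist_sym; exact Hd).
    pose proof (dist_tri M (G k p) (g p) (G k q)).
    pose proof (dist_tri M (g p) (g c) (G k q)).
    pose proof (dist_tri M (g c) (g e) (G k q)).
    pose proof (dist_tri M (g e) (g q) (G k q)).
    rewrite (dist_sym M (g p) (g c)) in *. rewrite (dist_sym M (g q) (G k q)) in *.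
    unfold eta in *. lra.
Qed.

Lemma near_choice (X : MetricSpace) (A : X -> Prop) (x : X) (hne : exists a, A a) (k : nat) :
  exists a, A a /\ forall j, (j <= k)%nat -> (exists b, A b /\ dist x b < ir j) -> dist x a < ir j.
Proof.
  induction k as [|k IH].
  - destruct (classic (exists b, A b /\ dist x b < ir 0)) as [[b [Hb Hd]]|Hn].
    + exists b. split. exact Hb. intros j Hj _. replace j with 0%nat by lia. exact Hd.
    + destruct hne as [a Ha]. exists a. split. exact Ha. intros j Hj Hx.
      replace j with 0%nat in Hx by lia. contradiction.
  - destruct (classic (exists b, A b /\ dist x b < ir (S k))) as [[b [Hb Hd]]|Hn].
    + exists b. split. exact Hb. intros j Hj _. pose proof (ir_le j (S k) Hj). lra.
    + destruct IH as [a [Ha Ha2]]. exists a. split. exact Ha. intros j Hj Hx.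
      destruct (Nat.eq_dec j (S k)) as [->|Hne]. contradiction. apply Ha2. lia. exact Hx.
Qed.

Lemma limcomp (X Y M : MetricSpace) (f : X -> Y) (hf : perfect f) (y0 : Y)
  (g : X -> M) (gc : continuous g)
  (A : nat -> X -> Prop) (ys : nat -> Y) (hAf : forall k a, A k a -> f a = ys k)
  (hys : forall k, dist (ys k) y0 < ir k) (hne : forall k, exists a, A k a)
  (G : nat -> X -> M) (hG : forall k a, f a = ys k -> dist (G k a) (g a) < ir k)
  (r : R) (bad : forall k x, A k x -> exists z, Ccomp f (G k) (ys k) x z /\ ~ nbhd (A k) r z)
  (x : X) (hx : liminf A x) (hfx : f x = y0)
  (good : forall z, Ccomp f g y0 x z -> exists a, liminf A a /\ dist z a < r) : False.
Proof.
  assert (Hxk : forall k, exists a, A k a /\ forall j, (j <= k)%nat -> (exists b, A k b /\ dist x b < ir j) -> dist x a < ir j).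
  { intros k. apply near_choice. apply hne. }
  set (xk := fun k => proj1_sig (constructive_indefinite_description _ (Hxk k))).
  assert (Hxk2 : forall k, A k (xk k) /\ forall j, (j <= k)%nat -> (exists b, A k b /\ dist x b < ir j) -> dist x (xk k) < ir j).
  { intros k. exact (proj2_sig (constructive_indefinite_description _ (Hxk k))). }
  assert (Hconv : forall eps, 0 < eps -> exists N, forall k, (N <= k)%nat -> dist x (xk k) < eps).
  { intros eps He. destruct (ir_small eps He) as [j Hj].
    destruct (hx (ir j) (ir_pos j)) as [N HN]. exists (Nat.max N j). intros k Hk.
    eapply Rlt_trans; [|apply (Hj j); lia]. apply Hxk2. lia. apply HN. lia. }
  assert (Hb : forall k, exists p : (X -> Prop) * X, is_connected (fst p) /\
             (forall w, fst p w -> G k w = G k (xk k) /\ f w = ys k) /\ fst p (xk k) /\ fst p (snd p)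
             /\ ~ nbhd (A k) r (snd p)).
  { intros k. destruct (bad k (xk k) (proj1 (Hxk2 k))) as [z [[C [H1 [H2 [H3 H4]]]] Hz]].
    exists (pair C z). simpl. auto. }
  set (D := fun k => fst (proj1_sig (constructive_indefinite_description _ (Hb k)))).
  set (zk := fun k => snd (proj1_sig (constructive_indefinite_description _ (Hb k)))).
  assert (HD : forall k, is_connected (D k) /\
             (forall w, D k w -> G k w = G k (xk k) /\ f w = ys k) /\ D k (xk k) /\ D k (zk k)
             /\ ~ nbhd (A k) r (zk k)).
  { intros k. exact (proj2_sig (constructive_indefinite_description _ (Hb k))). }
  assert (hDA : forall k a, D k a -> dist (f a) y0 < ir k).
  { intros k a Ha. rewrite (proj2 (proj1 (proj2 (HD k)) a Ha)). apply hys. }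
  destruct (clust X Y f hf y0 zk) as [z [_ Hz]].
  { intros k. apply hDA. apply HD. }
  assert (HxD : liminf D x).
  { intros eps He. destruct (Hconv eps He) as [N HN]. exists N. intros k Hk. exists (xk k).
    split. apply HD. apply HN. exact Hk. }
  assert (HzD : limsup D z).
  { intros eps He N. destruct (Hz eps He N) as [k [Hk Hd]]. exists k. split. exact Hk.
    exists (zk k). split. apply HD. rewrite dist_sym. exact Hd. }
  assert (HS : forall w, limsup D w -> g w = g x /\ f w = y0).
  { intros w Hw. split; [|exact (limsup_fiber X Y f (proj1 hf) y0 D hDA w Hw)].
    apply dist_eq0. apply Rle_antisym; [|apply dist_nonneg]. apply Rnot_lt_le. intros Hp.
    set (eps := dist (g w) (g x)) in *. set (eta := eps/4).
    assert (Heta : 0 < eta) by (unfold eta; lra).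
    destruct (gc w eta Heta) as [dw [Hdw Hdw2]].
    destruct (gc x eta Heta) as [dx [Hdx Hdx2]].
    destruct (ir_small eta Heta) as [N1 HN1].
    destruct (Hconv dx Hdx) as [N2 HN2].
    destruct (Hw dw Hdw (Nat.max N1 N2)) as [k [Hk [a [Ha Hda]]]].
    destruct (HD k) as [_ [HS [_ _]]]. destruct (HS a Ha) as [Hga Hfa].
    pose proof (hG k a Hfa) as E1. pose proof (hG k (xk k) (hAf k _ (proj1 (Hxk2 k)))) as E2.
    pose proof (HN1 k ltac:(lia)). pose proof (HN2 k ltac:(lia)).
    pose proof (Hdw2 a Hda) as E3. pose proof (Hdx2 (xk k) ltac:(auto)) as E4.
    rewrite Hga in E1.
    pose proof (dist_tri M (g w) (g a) (g x)).
    pose proof (dist_tri M (g a) (G k (xk k)) (g x)).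
    pose proof (dist_tri M (G k (xk k)) (g (xk k)) (g x)).
    rewrite (dist_sym M (g a) (G k (xk k))) in *. rewrite (dist_sym M (g (xk k)) (g x)) in *.
    unfold eta, eps in *. lra. }
  destruct (good z) as [a [Ha Hza]].
  { exists (limsup D). split.
    apply (limsup_connected X Y f hf y0 D hDA (fun k => proj1 (HD k)) x HxD).
    split. intros w Hw. exact (HS w Hw).
    split. apply liminf_limsup. exact HxD. exact HzD. }
  set (eta := r - dist z a).
  destruct (Ha (eta/2)) as [N1 HN1]. unfold eta; lra.
  destruct (Hz (eta/2)) with (N := N1) as [k [Hk Hd]]. unfold eta; lra.
  destruct (HN1 k Hk) as [a' [Ha' Hda']].
  apply (proj2 (proj2 (proj2 (proj2 (HD k))))). exists a'. split. exact Ha'.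
  pose proof (dist_tri X (zk k) z a). pose proof (dist_tri X (zk k) a a').
  unfold eta in *. lra.
Qed.

Lemma nets (X Y : MetricSpace) (f : X -> Y) (hf : perfect f) (y0 : Y) :
  exists net : nat -> list X, forall j, (forall x, f x = y0 -> exists c, In c (net j) /\ dist c x < ir j).
Proof.
  assert (H : forall j, exists l : list X, forall x, f x = y0 -> exists c, In c l /\ dist c x < ir j).
  { intros j. destruct hf as [_ [_ hc]].
    destruct (hc y0 {c : X | f c = y0} (fun i z => dist (proj1_sig i) z < ir j)) as [l Hl].
    intros i. apply ball_open.
    intros x Hx. exists (exist _ x Hx). simpl. rewrite dist_self. apply ir_pos.
    exists (map (@proj1_sig _ _) l). intros x Hx. destruct (Hl x Hx) as [i [Hi Hd]].
    exists (proj1_sig i). split. apply in_map. exact Hi. exact Hd. }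
  exists (fun j => proj1_sig (constructive_indefinite_description _ (H j))).
  intros j. exact (proj2_sig (constructive_indefinite_description _ (H j))).
Qed.

Definition Pn {X : MetricSpace} (net : nat -> list X) (A0 : nat -> X -> Prop) (i k : nat) : Prop :=
  let (j, t) := Cantor.of_nat i in
  exists c, nth_error (net j) t = Some c /\ exists a, A0 k a /\ dist a c < ir j.

Lemma limeq (X Y : MetricSpace) (f : X -> Y) (y0 : Y) (net : nat -> list X)
  (hnet : forall j, (forall x, f x = y0 -> exists c, In c (net j) /\ dist c x < ir j))
  (A0 : nat -> X -> Prop) (s : nat -> nat)
  (hs : forall i, (exists N, forall j, (N <= j)%nat -> Pn net A0 i (s j)) \/
              (exists N, forall j, (N <= j)%nat -> ~ Pn net A0 i (s j)))
  x (hfx : f x = y0) (hx : limsup (fun k => A0 (s k)) x) : liminf (fun k => A0 (s k)) x.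
Proof.
  intros eps He. destruct (ir_small (eps/2)) as [j Hj]. lra. specialize (Hj j (le_n j)).
  destruct (hnet j x hfx) as [c [Hc Hcx]].
  destruct (In_nth_error _ _ Hc) as [t Ht].
  destruct (hs (Cantor.to_nat (j, t))) as [[N HN]|[N HN]].
  - exists N. intros k Hk. specialize (HN k Hk). unfold Pn in HN. rewrite Cantor.cancel_of_to in HN.
    destruct HN as [c' [Ht' [a [Ha Hda]]]]. rewrite Ht in Ht'. injection Ht' as <-.
    exists a. split. exact Ha. pose proof (dist_tri X x c a). rewrite (dist_sym X x c) in H.
    rewrite (dist_sym X c a) in H. lra.
  - exfalso. destruct (hx (ir j - dist c x)) with (N := N) as [k [Hk [a [Ha Hda]]]]. lra.
    apply (HN k Hk). unfold Pn. rewrite Cantor.cancel_of_to. exists c. split. exact Ht.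
    exists a. split. exact Ha. pose proof (dist_tri X a x c). rewrite (dist_sym X a x) in H.
    rewrite (dist_sym X x c) in H. lra.
Qed.

Lemma local (X Y M : MetricSpace) (f : X -> Y) (hf : perfect f) (g : X -> M) (gc : continuous g)
  (y0 : Y) (m n : nat) (hK : Kset f m n y0 g) :
  exists del, 0 < del /\ forall y', dist y0 y' < del -> forall g' : X -> M,
    (forall x, f x = y' -> dist (g' x) (g x) < del) -> Kset f m n y' g'.
Proof.
  apply NNPP. intros Hn.
  assert (Hb : forall k, exists t : Y * (X -> M) * (X -> Prop),
    dist y0 (fst (fst t)) < ir k /\ (forall x, f x = fst (fst t) -> dist (snd (fst t) x) (g x) < ir k) /\
    is_continuum (snd t) /\ (forall x, snd t x -> f x = fst (fst t)) /\
    diam_ge (image (snd (fst t)) (snd t)) (1 / INR n) /\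
    forall x, snd t x -> exists z, Ccomp f (snd (fst t)) (fst (fst t)) x z /\ ~ nbhd (snd t) (1 / INR m) z).
  { intros k. apply NNPP. intros C. apply Hn. exists (ir k). split. apply ir_pos.
    intros y' Hy' g' Hg' L HL HLf HLd. apply NNPP. intros C2. apply C.
    exists (pair (pair y' g') L). simpl. split. exact Hy'. split. exact Hg'. split. exact HL.
    split. exact HLf. split. exact HLd. intros x Hx. apply NNPP. intros C3. apply C2.
    exists x. split. exact Hx. intros z Hz. apply NNPP. intros C4. apply C3. exists z. auto. }
  set (T := fun k => proj1_sig (constructive_indefinite_description _ (Hb k))).
  assert (HT : forall k, let t := T k in
    dist y0 (fst (fst t)) < ir k /\ (forall x, f x = fst (fst t) -> dist (snd (fst t) x) (g x) < ir k) /\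
    is_continuum (snd t) /\ (forall x, snd t x -> f x = fst (fst t)) /\
    diam_ge (image (snd (fst t)) (snd t)) (1 / INR n) /\
    forall x, snd t x -> exists z, Ccomp f (snd (fst t)) (fst (fst t)) x z /\ ~ nbhd (snd t) (1 / INR m) z).
  { intros k. exact (proj2_sig (constructive_indefinite_description _ (Hb k))). }
  destruct (nets X Y f hf y0) as [net hnet].
  set (A0 := fun k => snd (T k)).
  destruct (diag (Pn net A0)) as [s [Hs1 Hs2]].
  set (A := fun k => A0 (s k)).
  set (ys := fun k => fst (fst (T (s k)))).
  set (G := fun k => snd (fst (T (s k)))).
  assert (hAf : forall k a, A k a -> f a = ys k).
  { intros k a Ha. apply (HT (s k)). exact Ha. }
  assert (hys : forall k, dist (ys k) y0 < ir k).
  { intros k. rewrite dist_sym. eapply Rlt_le_trans. apply (HT (s k)). apply ir_le. apply Hs1. }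
  assert (hne : forall k, exists a, A k a).
  { intros k. apply (HT (s k)). }
  assert (hG : forall k a, f a = ys k -> dist (G k a) (g a) < ir k).
  { intros k a Ha. eapply Rlt_le_trans. apply (HT (s k)). exact Ha. apply ir_le. apply Hs1. }
  assert (hA : forall k a, A k a -> dist (f a) y0 < ir k).
  { intros k a Ha. rewrite (hAf k a Ha). apply hys. }
  assert (hlim : forall x, limsup A x -> liminf A x).
  { intros x Hx. apply (limeq X Y f y0 net hnet A0 s Hs2 x). 
    exact (limsup_fiber X Y f (proj1 hf) y0 A hA x Hx). exact Hx. }
  set (ak := fun k => proj1_sig (constructive_indefinite_description _ (hne k))).
  destruct (clust X Y f hf y0 ak) as [x0 [_ Hx0]].
  { intros k. apply hA. exact (proj2_sig (constructive_indefinite_description _ (hne k))). }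
  assert (Hx0L : limsup A x0).
  { intros eps He N. destruct (Hx0 eps He N) as [k [Hk Hd]]. exists k. split. exact Hk.
    exists (ak k). split. exact (proj2_sig (constructive_indefinite_description _ (hne k))).
    rewrite dist_sym. exact Hd. }
  assert (Hfib : forall x, limsup A x -> f x = y0) by
    (exact (limsup_fiber X Y f (proj1 hf) y0 A hA)).
  destruct (hK (limsup A)) as [x [Hx Hgood]].
  - split. exists x0. exact Hx0L. split.
    + apply closed_sub_compact with (K := fun x => f x = y0). apply hf. exact Hfib.
      apply limsup_closed.
    + apply (limsup_connected X Y f hf y0 A hA) with (x0 := x0).
      intros k. apply (HT (s k)). apply hlim. exact Hx0L.
  - exact Hfib.
  - apply (limdiam X Y M f hf y0 g gc A hA G). intros k a Ha. apply hG. apply hAf. exact Ha.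
    intros k. apply (HT (s k)).
  - apply (limcomp X Y M f hf y0 g gc A ys hAf hys hne G hG (1 / INR m)) with (x := x).
    intros k a Ha. apply (HT (s k)). exact Ha.
    apply hlim. exact Hx. apply Hfib. exact Hx.
    intros z Hz. destruct (Hgood z Hz) as [a [Ha Hd]]. exists a. split. apply hlim. exact Ha. exact Hd.
Qed.

Definition Good {X Y M : MetricSpace} (f : X -> Y) (g : X -> M) (m n : nat) (H : Y -> Prop)
  (y : Y) (r : R) : Prop :=
  0 < r <= 1 /\ forall y', H y' -> dist y y' < r -> forall g' : X -> M,
    (forall x, f x = y' -> dist (g' x) (g x) < r) -> Kset f m n y' g'.

Lemma Good_down {X Y M : MetricSpace} (f : X -> Y) (g : X -> M) m n H y r r' :
  Good f g m n H y r -> 0 < r' <= r -> Good f g m n H y r'.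
Proof.
  intros [H1 H2] H3. split. lra. intros y' Hy' Hd g' Hg'. apply (H2 y' Hy'). lra.
  intros x Hx. specialize (Hg' x Hx). lra.
Qed.

Lemma Good_shift {X Y M : MetricSpace} (f : X -> Y) (g : X -> M) m n H y y1 r :
  Good f g m n H y r -> dist y y1 < r -> Good f g m n H y1 (r - dist y y1).
Proof.
  intros [H1 H2] H3. pose proof (dist_nonneg Y y y1). split. lra.
  intros y' Hy' Hd g' Hg'. apply (H2 y' Hy').
  pose proof (dist_tri Y y y1 y'). lra.
  intros x Hx. specialize (Hg' x Hx). lra.
Qed.

Lemma Good_pos (X Y M : MetricSpace) (f : X -> Y) (hf : perfect f) (g : X -> M) (gc : continuous g)
  m n H (hH : is_closed H) (hg : KsetH f m n H g) y : exists r, Good f g m n H y r.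
Proof.
  destruct (classic (H y)) as [Hy|Hy].
  - destruct (local X Y M f hf g gc y m n (hg y Hy)) as [d [Hd Hd2]].
    exists (Rmin d 1). pose proof (Rmin_l d 1). pose proof (Rmin_r d 1).
    split. split. apply Rmin_pos; lra. lra.
    intros y' _ Hy' g' Hg'. apply Hd2. lra. intros x Hx. specialize (Hg' x Hx). lra.
  - destruct (hH y Hy) as [r [Hr Hr2]].
    exists (Rmin r 1). pose proof (Rmin_l r 1). pose proof (Rmin_r r 1).
    split. split. apply Rmin_pos; lra. lra.
    intros y' Hy' Hd. exfalso. apply (Hr2 y'). lra. exact Hy'.
Qed.

Theorem proposition2p4 (X Y M : MetricSpace) (f : X -> Y)
  (hf : perfect f) (hM : complete M)
  (H : Y -> Prop) (hH : is_closed H) (m n : nat) (hm : (1 <= m)%nat) (hn : (1 <= n)%nat) :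
  sl_open (KsetH (M := M) f m n H).
Proof.
  intros g gc hg.
  assert (Hc : forall y, {p : R | is_lub (Good f g m n H y) p}).
  { intros y. apply completeness. exists 1. intros r [Hr _]. lra.
    apply (Good_pos X Y M f hf g gc m n H hH hg y). }
  set (phi := fun y => proj1_sig (Hc y)).
  assert (Hphi : forall y, is_lub (Good f g m n H y) (phi y)).
  { intros y. exact (proj2_sig (Hc y)). }
  assert (P1 : forall y, 0 < phi y <= 1).
  { intros y. destruct (Good_pos X Y M f hf g gc m n H hH hg y) as [r Hr].
    destruct (Hphi y) as [Hu Hl]. pose proof (Hu r Hr). destruct Hr as [Hr _]. split. lra.
    apply Hl. intros r' [Hr' _]. lra. }
  assert (P2 : forall y r, 0 < r < phi y -> Good f g m n H y r).
  { intros y r Hr. apply NNPP. intros C. destruct (Hphi y) as [Hu Hl].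
    assert (phi y <= r). { apply Hl. intros r' Hr'. apply Rnot_lt_le. intros C2. apply C.
      apply (Good_down f g m n H y r' r Hr'). lra. }
    lra. }
  assert (P3 : forall y y1, phi y - dist y y1 <= phi y1).
  { intros y y1. pose proof (P1 y1). pose proof (dist_nonneg Y y y1).
    destruct (Rle_lt_dec (phi y) (dist y y1)) as [Hle|Hlt]. lra.
    apply Rnot_lt_le. intros C. set (r := (phi y + phi y1 + dist y y1)/2).
    assert (Gr : Good f g m n H y r) by (apply P2; unfold r; lra).
    apply (Good_shift f g m n H y y1 r) in Gr; [|unfold r; lra].
    pose proof (proj1 (Hphi y1) _ Gr). unfold r in *. lra. }
  exists (fun x => phi (f x) / 2). split; [|split].
  - intros x eps He. destruct (proj1 hf x eps He) as [d [Hd Hd2]]. exists d. split. exact Hd.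
    intros z Hz. specialize (Hd2 z Hz). unfold Rdist.
    pose proof (P3 (f x) (f z)). pose proof (P3 (f z) (f x)). rewrite dist_sym in H1.
    apply Rabs_def1; lra.
  - intros x. pose proof (P1 (f x)). lra.
  - intros g' _ Hg' y Hy. pose proof (P1 y).
    assert (Gy : Good f g m n H y (3 * phi y / 4)) by (apply P2; lra).
    apply (proj2 Gy y Hy). rewrite dist_self. lra.
    intros x Hx. specialize (Hg' x). rewrite Hx in Hg'. lra.
Qed.
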